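(* Let $D,\Omega$ be planar domains with $0\notin D$, $\wp$ a smooth positive function on $\Omega$, and let $f:D\to\Omega$ be a diffeomorphism such that $$\wp^2(f(z))\,f_z\,\overline{f_{\bar z}}=\frac{\mathbf{c}}{z^2},\qquad z\in D,$$ for a real constant $\mathbf{c}$. Assume that for $w\in\Omega$ the following function is well defined: $$\omega(w)=\begin{cases}2\sqrt{-\mathbf{c}}\,\log\dfrac{1}{|f^{-1}(w)|},&\mathbf{c}<0,\\[4pt] 2\sqrt{\mathbf{c}}\,\arg(f^{-1}(w)),&\mathbf{c}>0.\end{cases}$$ Then $\omega$ satisfies $$\mathrm{div}\left(\frac{\nabla\omega}{\sqrt{1+\frac{|\nabla\omega(u,v)|^2}{\wp^2(u,v)}}}\right)=0\quad\text{in }\Omega.$$ *)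

(* Defs.v *)
From Stdlib Require Import Reals.
From Coquelicot Require Export Coquelicot.
Open Scope R_scope.

Definition partial_x (g : R * R -> R) (p : R * R) : R :=
  Derive (fun t => g (t, snd p)) (fst p).
Definition partial_y (g : R * R -> R) (p : R * R) : R :=
  Derive (fun t => g (fst p, t)) (snd p).

Fixpoint Ck (n : nat) (U : R * R -> Prop) (g : R * R -> R) : Prop :=
  match n with
  | O => forall p, U p -> continuous g p
  | S k => (forall p, U p -> continuous g p) /\
           (forall p, U p -> ex_derive (fun t => g (t, snd p)) (fst p) /\
                             ex_derive (fun t => g (fst p, t)) (snd p)) /\
           Ck k U (partial_x g) /\ Ck k U (partial_y g)
  end.

Definition smooth_on (U : R * R -> Prop) (g : R * R -> R) : Prop :=
  forall n, Ck n U g.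

Definition smooth_map_on (U : R * R -> Prop) (f : C -> C) : Prop :=
  smooth_on U (fun p => fst (f p)) /\ smooth_on U (fun p => snd (f p)).

Definition connected_set (U : R * R -> Prop) : Prop :=
  forall A B : R * R -> Prop, open A -> open B ->
    (forall p, U p -> A p \/ B p) ->
    (exists p, U p /\ A p) -> (exists p, U p /\ B p) ->
    exists p, U p /\ A p /\ B p.

Definition planar_domain (U : R * R -> Prop) : Prop :=
  (exists p, U p) /\ open U /\ connected_set U.

Definition diffeo (D Om : R * R -> Prop) (f g : C -> C) : Prop :=
  (forall z, D z -> Om (f z)) /\ (forall w, Om w -> D (g w)) /\
  (forall z, D z -> g (f z) = z) /\ (forall w, Om w -> f (g w) = w) /\
  smooth_map_on D f /\ smooth_map_on Om g.

Definition dx (f : C -> C) (z : C) : C :=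
  (partial_x (fun p => fst (f p)) z, partial_x (fun p => snd (f p)) z).
Definition dy (f : C -> C) (z : C) : C :=
  (partial_y (fun p => fst (f p)) z, partial_y (fun p => snd (f p)) z).
Definition f_z (f : C -> C) (z : C) : C :=
  Cmult (RtoC (/2)) (Cminus (dx f z) (Cmult Ci (dy f z))).
Definition f_zbar (f : C -> C) (z : C) : C :=
  Cmult (RtoC (/2)) (Cplus (dx f z) (Cmult Ci (dy f z))).

Definition arg_branch (D : R * R -> Prop) (theta : C -> R) : Prop :=
  (forall z, D z -> z = (Cmod z * cos (theta z), Cmod z * sin (theta z))) /\
  (forall z, D z -> continuous theta z).

(* the function omega of the statement; g = f^{-1}, theta = branch of arg *)
Definition omega (c : R) (g : C -> C) (theta : C -> R) (w : C) : R :=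
  if Rlt_dec c 0 then 2 * sqrt (- c) * ln (/ Cmod (g w))
  else 2 * sqrt c * theta (g w).

Definition flux_x (wp om : R * R -> R) (w : R * R) : R :=
  partial_x om w /
  sqrt (1 + (partial_x om w ^ 2 + partial_y om w ^ 2) / wp w ^ 2).
Definition flux_y (wp om : R * R -> R) (w : R * R) : R :=
  partial_y om w /
  sqrt (1 + (partial_x om w ^ 2 + partial_y om w ^ 2) / wp w ^ 2).

(* Main.v *)
Require Import Defs.
From Stdlib Require Import Reals Lra.
From Coquelicot Require Import Coquelicot.
Open Scope R_scope.

Lemma cont2d (h : R * R -> R) p :
  continuous h p -> continuity_2d_pt (fun u v => h (u, v)) (fst p) (snd p).
Proof.
  intros H. apply continuity_2d_pt_filterlim.
  destruct p as [x y]; simpl.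
  eapply filterlim_ext; [|exact H].
  intros [u v]; reflexivity.
Qed.

Lemma Ck_diff_n n : forall U h, Ck n U h -> forall p, U p ->
  ex_diff_n (fun u v => h (u, v)) n (fst p) (snd p).
Proof.
  induction n as [|n IH]; intros U h H p Hp.
  - simpl in H. split; [now apply cont2d, H|exact I].
  - destruct H as [Hc [Hd [Hx Hy]]].
    split; [now apply cont2d, Hc|].
    destruct (Hd p Hp) as [H1 H2].
    split; [exact H1|]. split; [exact H2|].
    split.
    + exact (IH U (partial_x h) Hx p Hp).
    + exact (IH U (partial_y h) Hy p Hp).
Qed.

Lemma open_2d (U : R * R -> Prop) p : open U -> U p ->
  locally_2d (fun u v => U (u, v)) (fst p) (snd p).
Proof.
  intros HU Hp. apply locally_2d_locally.
  destruct p as [x y]. simpl.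
  eapply filter_imp; [|exact (HU _ Hp)].
  intros [u v] H; exact H.
Qed.

Lemma diff_C2 U h p : open U -> Ck 2 U h -> U p ->
  differentiable_pt_lim (fun u v => h (u, v)) (fst p) (snd p)
    (partial_x h p) (partial_y h p).
Proof.
  intros HU H Hp.
  assert (HL : locally_2d (fun u v => ex_diff_n (fun u v => h (u, v)) 2 u v) (fst p) (snd p)).
  { eapply locally_2d_impl; [|exact (open_2d U p HU Hp)].
    apply locally_2d_forall. intros u v Huv.
    exact (Ck_diff_n 2 U h H (u, v) Huv). }
  destruct (Taylor_Lagrange_2d _ 1 _ _ HL) as [Dc HD].
  intros eps.
  set (d := eps / (Rabs Dc + 1)).
  assert (Hd : 0 < d) by (unfold d; apply Rdiv_lt_0_compat; [apply cond_pos| pose proof (Rabs_pos Dc); lra]).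
  destruct HD as [d1 HD].
  exists (mkposreal _ (Rmin_pos _ _ (cond_pos d1) Hd)).
  intros u v Hu Hv. simpl in Hu, Hv.
  pose proof (Rmin_l d1 d) as m1. pose proof (Rmin_r d1 d) as m2.
  specialize (HD u v (Rlt_le_trans _ _ _ Hu m1) (Rlt_le_trans _ _ _ Hv m1)).
  pose proof (Rlt_le_trans _ _ _ Hu m2) as Hu2. pose proof (Rlt_le_trans _ _ _ Hv m2) as Hv2.
  assert (E : DL_pol 1 (fun u v => h (u, v)) (fst p) (snd p) (u - fst p) (v - snd p)
     = h (fst p, snd p) + (partial_x h p * (u - fst p) + partial_y h p * (v - snd p))).
  { unfold DL_pol, differential, partial_derive, partial_x, partial_y. simpl.
    unfold Binomial.C; simpl. destruct p; simpl. field. }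
  rewrite E in HD.
  set (M := Rmax (Rabs (u - fst p)) (Rabs (v - snd p))) in *.
  assert (HM0 : 0 <= M) by (unfold M; eapply Rle_trans; [apply Rabs_pos|apply Rmax_l]).
  assert (HMd : M < d) by (unfold M; apply Rmax_lub_lt; assumption).
  replace (h (u, v) - (h (fst p, snd p) + (partial_x h p * (u - fst p) + partial_y h p * (v - snd p))))
     with (h (u, v) - h (fst p, snd p) - (partial_x h p * (u - fst p) + partial_y h p * (v - snd p))) in HD by ring.
  eapply Rle_trans. { exact HD. }
  simpl.
  assert (HD' : Dc * (M * 1) <= (Rabs Dc + 1) * M).
  { pose proof (Rle_abs Dc). rewrite Rmult_1_r. apply Rmult_le_compat_r; lra. }
  assert (Hd2 : (Rabs Dc + 1) * d = eps).
  { unfold d. field. pose proof (Rabs_pos Dc); lra. }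
  pose proof (Rabs_pos Dc).
  assert (S1 : Dc * (M * (M * 1)) <= (Rabs Dc + 1) * M * M).
  { replace (Dc * (M * (M * 1))) with ((Dc * (M*1)) * M) by ring.
    apply Rmult_le_compat_r; lra. }
  assert (S2 : (Rabs Dc + 1) * M * M <= (Rabs Dc + 1) * d * M).
  { apply Rmult_le_compat_r; [lra|]. apply Rmult_le_compat_l; lra. }
  rewrite Hd2 in S2. lra.
Qed.

Lemma sq_pos (x : R) : x <> 0 -> 0 < x^2.
Proof. intros H. destruct (Rdichotomy _ _ H); nra. Qed.

Lemma alg (Ux Uy Vx Vy G11 G12 G21 G22 a b p sg : R) :
 G11*Ux + G12*Vx = 1 -> G21*Ux + G22*Vx = 0 -> G11*Uy + G12*Vy = 0 -> G21*Uy + G22*Vy = 1 ->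
 0 < p ->
 p^2*(Ux^2+Vx^2) + a^2 = p^2*(Uy^2+Vy^2) + b^2 ->
 p^2*(Ux*Uy+Vx*Vy) + a*b = 0 ->
 sg*sg = 1 -> 0 < sg*(G11*G22 - G12*G21) ->
 (a*G11 + b*G21) / sqrt (1 + ((a*G11 + b*G21)^2+(a*G12 + b*G22)^2)/p^2) = sg*(G22*a - G12*b) /\
 (a*G12 + b*G22) / sqrt (1 + ((a*G11 + b*G21)^2+(a*G12 + b*G22)^2)/p^2) = sg*(G11*b - G21*a).
Proof.
  intros e1 e2 e3 e4 Hp C1 C2 Hsg Hd.
  assert (Hsg0 : sg <> 0) by (intro H0; rewrite H0 in Hsg; lra).
  set (J := Ux*Vy - Uy*Vx).
  assert (HdJ : (G11*G22 - G12*G21) * J = 1).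
  { unfold J. transitivity ((G11*Ux + G12*Vx)*(G21*Uy + G22*Vy) - (G11*Uy + G12*Vy)*(G21*Ux + G22*Vx)).
    ring. rewrite e1, e2, e3, e4. ring. }
  assert (HJ : J <> 0) by (intro H0; rewrite H0 in HdJ; lra).
  assert (h11 : G11 * J = Vy).
  { unfold J. transitivity ((G11*Ux + G12*Vx)*Vy - (G11*Uy + G12*Vy)*Vx). ring. rewrite e1, e3. ring. }
  assert (h12 : G12 * J = - Uy).
  { unfold J. transitivity (- ((G11*Ux + G12*Vx)*Uy - (G11*Uy + G12*Vy)*Ux)). ring. rewrite e1, e3. ring. }
  assert (h21 : G21 * J = - Vx).
  { unfold J. transitivity ((G21*Ux + G22*Vx)*Vy - (G21*Uy + G22*Vy)*Vx). ring. rewrite e2, e4. ring. }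
  assert (h22 : G22 * J = Ux).
  { unfold J. transitivity (- ((G21*Ux + G22*Vx)*Uy - (G21*Uy + G22*Vy)*Ux)). ring. rewrite e2, e4. ring. }
  assert (HsJ : 0 < sg * J).
  { assert (sg * J = (sg * (G11*G22 - G12*G21)) * (J * J)).
    { transitivity (sg * J * ((G11*G22 - G12*G21) * J)). rewrite HdJ; ring. ring. }
    rewrite H. apply Rmult_lt_0_compat; [lra|]. nra. }
  set (q := p^2).
  assert (Hq : 0 < q) by (unfold q; nra).
  set (E := q*(Ux^2+Vx^2) + a^2).
  set (R1 := a*Vy - b*Vx). set (S1 := -a*Uy + b*Ux).
  assert (hou : (a*G11 + b*G21) * J = R1) by (unfold R1; rewrite Rmult_plus_distr_r, !Rmult_assoc, h11, h21; ring).
  assert (hov : (a*G12 + b*G22) * J = S1) by (unfold S1; rewrite Rmult_plus_distr_r, !Rmult_assoc, h12, h22; ring).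
  assert (C1' : q*(Ux^2+Vx^2 - (Uy^2+Vy^2)) + a^2 - b^2 = 0) by (unfold q; lra).
  assert (C2' : q*(Ux*Uy+Vx*Vy) + a*b = 0) by (unfold q; lra).
  assert (Key : E^2 = q^2*J^2 + q*(R1^2 + S1^2)).
  { assert (E^2 - (q^2*J^2 + q*(R1^2 + S1^2)) =
       (q*(Ux*Uy+Vx*Vy) + a*b)^2 + (a^2 + q*(Ux^2+Vx^2))*(q*(Ux^2+Vx^2 - (Uy^2+Vy^2)) + a^2 - b^2)).
    { unfold E, J, R1, S1. ring. }
    rewrite C1', C2' in H. lra. }
  assert (HE : 0 < E).
  { assert (HE1 : 0 <= E) by (unfold E; nra).
    assert (HE2 : 0 < E^2).
    { rewrite Key. assert (0 < J^2) by (apply sq_pos; exact HJ).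
      assert (0 < q^2) by (apply sq_pos; lra).
      assert (0 <= R1^2 + S1^2) by (apply Rplus_le_le_0_compat; apply pow2_ge_0).
      assert (0 < q^2*J^2) by (apply Rmult_lt_0_compat; lra).
      assert (0 <= q*(R1^2 + S1^2)) by (apply Rmult_le_pos; lra). lra. }
    destruct (Req_dec E 0) as [HE0|HE0]; [rewrite HE0 in HE2; simpl in HE2; lra|lra]. }
  assert (HW : sqrt (1 + ((a*G11 + b*G21)^2+(a*G12 + b*G22)^2)/q) = E / (q * (sg * J))).
  { rewrite <- (sqrt_Rsqr (E / (q * (sg * J)))).
    2: { apply Rlt_le, Rdiv_lt_0_compat; [lra|]. apply Rmult_lt_0_compat; lra. }
    f_equal. unfold Rsqr.
    assert (eou : a*G11 + b*G21 = R1 / J) by (rewrite <- hou; field; exact HJ).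
    assert (eov : a*G12 + b*G22 = S1 / J) by (rewrite <- hov; field; exact HJ).
    rewrite eou, eov.
    assert (sg^2 = 1) by (rewrite <- Hsg; ring).
    transitivity (E^2 / (q^2 * J^2 * sg^2)).
    2: { field. repeat split; try exact HJ; try exact Hsg0; lra. }
    rewrite H, Key. field. repeat split; try exact HJ; try exact Hsg0; lra. }
  rewrite HW.
  split.
  - assert (G22 = Ux / J) by (rewrite <- h22; field; exact HJ).
    assert (G12 = - Uy / J) by (rewrite <- h12; field; exact HJ).
    assert (eou : a*G11 + b*G21 = R1 / J) by (rewrite <- hou; field; exact HJ).
    rewrite eou, H, H0.
    assert (KR : q*J*R1 = E*(a*Ux + b*Uy)).
    { assert (q*J*R1 - E*(a*Ux + b*Uy) = (-Ux*a)*(q*(Ux^2+Vx^2 - (Uy^2+Vy^2)) + a^2 - b^2)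
          + (-Ux*b - Uy*a)*(q*(Ux*Uy+Vx*Vy) + a*b)) by (unfold J, E, R1; ring).
      rewrite C1', C2' in H1. lra. }
    apply Rmult_eq_reg_r with (J * E). 2: { intro Hne. apply Rmult_integral in Hne. destruct Hne as [Hne|Hne]; [exact (HJ Hne)|lra]. }
    transitivity (sg * (q*J*R1)). { field. repeat split; try exact HJ; try exact Hsg0; lra. }
    rewrite KR. field. exact HJ.
  - assert (G11 = Vy / J) by (rewrite <- h11; field; exact HJ).
    assert (G21 = - Vx / J) by (rewrite <- h21; field; exact HJ).
    assert (eov : a*G12 + b*G22 = S1 / J) by (rewrite <- hov; field; exact HJ).
    rewrite eov, H, H0.
    assert (KS : q*J*S1 = E*(a*Vx + b*Vy)).
    { assert (q*J*S1 - E*(a*Vx + b*Vy) = (-Vx*a)*(q*(Ux^2+Vx^2 - (Uy^2+Vy^2)) + a^2 - b^2)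
          + (-Vx*b - Vy*a)*(q*(Ux*Uy+Vx*Vy) + a*b)) by (unfold J, E, S1; ring).
      rewrite C1', C2' in H1. lra. }
    apply Rmult_eq_reg_r with (J * E). 2: { intro Hne. apply Rmult_integral in Hne. destruct Hne as [Hne|Hne]; [exact (HJ Hne)|lra]. }
    transitivity (sg * (q*J*S1)). { field. repeat split; try exact HJ; try exact Hsg0; lra. }
    rewrite KS. field. exact HJ.
Qed.

Definition aa (c : R) (z : C) : R :=
  if Rlt_dec c 0 then - (2 * sqrt (- c)) * fst z / (fst z ^ 2 + snd z ^ 2)
  else - (2 * sqrt c) * snd z / (fst z ^ 2 + snd z ^ 2).
Definition bb (c : R) (z : C) : R :=
  if Rlt_dec c 0 then - (2 * sqrt (- c)) * snd z / (fst z ^ 2 + snd z ^ 2)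
  else (2 * sqrt c) * fst z / (fst z ^ 2 + snd z ^ 2).

Lemma hopf_parts Ux Vx Uy Vy p c x y : x^2 + y^2 <> 0 ->
 Cmult (RtoC (p ^ 2)) (Cmult (Cmult (RtoC (/2)) (Cminus (Ux,Vx) (Cmult Ci (Uy,Vy))))
    (Cconj (Cmult (RtoC (/2)) (Cplus (Ux,Vx) (Cmult Ci (Uy,Vy)))))) = Cdiv (RtoC c) (Cmult (x,y) (x,y)) ->
 p^2*((Ux^2+Vx^2) - (Uy^2+Vy^2)) = 4*c*(x^2-y^2)/(x^2+y^2)^2 /\
 p^2*(Ux*Uy+Vx*Vy) = 4*c*x*y/(x^2+y^2)^2.
Proof.
  intros Hr H.
  unfold Cmult, Cdiv, Cinv, Cminus, Cplus, Copp, Cconj, RtoC, Ci in H. simpl in H.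
  injection H as H1 H2.
  assert (Hr4 : (x * x - y * y) * ((x * x - y * y) * 1) + (x * y + y * x) * ((x * y + y * x) * 1) = (x^2+y^2)^2) by ring.
  rewrite Hr4 in H1, H2.
  assert (Hr2 : (x^2+y^2)^2 <> 0) by (apply pow_nonzero; exact Hr).
  split.
  - transitivity (4 * (c * ((x * x - y * y) / (x ^ 2 + y ^ 2) ^ 2) -
       0 * (- (x * y + y * x) / (x ^ 2 + y ^ 2) ^ 2))).
    + rewrite <- H1. field.
    + field. exact Hr.
  - transitivity (-2 * (c * (- (x * y + y * x) / (x ^ 2 + y ^ 2) ^ 2) +
       0 * ((x * x - y * y) / (x ^ 2 + y ^ 2) ^ 2))).
    + rewrite <- H2. field.
    + field. exact Hr.
Qed.

Lemma conf c x y Ux Vx Uy Vy p : x^2 + y^2 <> 0 -> c <> 0 ->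
 p^2*((Ux^2+Vx^2) - (Uy^2+Vy^2)) = 4*c*(x^2-y^2)/(x^2+y^2)^2 ->
 p^2*(Ux*Uy+Vx*Vy) = 4*c*x*y/(x^2+y^2)^2 ->
 p^2*(Ux^2+Vx^2) + (aa c (x,y))^2 = p^2*(Uy^2+Vy^2) + (bb c (x,y))^2 /\
 p^2*(Ux*Uy+Vx*Vy) + aa c (x,y) * bb c (x,y) = 0.
Proof.
  intros Hr Hc E1 E2. unfold aa, bb; simpl fst; simpl snd.
  destruct (Rlt_dec c 0) as [Hn|Hn].
  - assert (Hs : sqrt (-c) * sqrt (-c) = - c) by (apply sqrt_sqrt; lra).
    set (s := sqrt (-c)) in *. assert (Ec : c = - (s*s)) by lra.
    rewrite Ec in E1, E2. split.
    + apply (Rplus_eq_reg_r (- p^2*(Uy^2+Vy^2))).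
      transitivity (p^2*((Ux^2+Vx^2) - (Uy^2+Vy^2)) + (- (2 * s) * x / (x ^ 2 + y ^ 2)) ^ 2). ring.
      rewrite E1. field. exact Hr.
    + rewrite E2. field. exact Hr.
  - assert (Hs : sqrt c * sqrt c = c) by (apply sqrt_sqrt; lra).
    set (s := sqrt c) in *. assert (Ec : c = s*s) by lra.
    rewrite Ec in E1, E2. split.
    + apply (Rplus_eq_reg_r (- p^2*(Uy^2+Vy^2))).
      transitivity (p^2*((Ux^2+Vx^2) - (Uy^2+Vy^2)) + (- (2 * s) * y / (x ^ 2 + y ^ 2)) ^ 2). ring.
      rewrite E1. field. exact Hr.
    + rewrite E2. field. exact Hr.
Qed.

Lemma ln_chain (g1 g2 : R -> R) t0 d1 d2 k : is_derive g1 t0 d1 -> is_derive g2 t0 d2 -> g1 t0 ^2 + g2 t0 ^2 <> 0 ->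
  is_derive (fun t => k * ln (/ sqrt (g1 t ^ 2 + g2 t ^ 2))) t0 (- k * (g1 t0 * d1 + g2 t0 * d2) / (g1 t0 ^2 + g2 t0 ^2)).
Proof.
  intros H1 H2 Hr.
  assert (Hp : 0 < g1 t0 ^ 2 + g2 t0 ^ 2).
  { assert (0 <= g1 t0 ^ 2) by apply pow2_ge_0. assert (0 <= g2 t0 ^ 2) by apply pow2_ge_0. lra. }
  assert (HS : 0 < sqrt (g1 t0 ^ 2 + g2 t0 ^ 2)) by (apply sqrt_lt_R0; exact Hp).
  assert (HSS : sqrt (g1 t0 ^ 2 + g2 t0 ^ 2) * sqrt (g1 t0 ^ 2 + g2 t0 ^ 2) = g1 t0 ^ 2 + g2 t0 ^ 2) by (apply sqrt_sqrt; lra).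
  auto_derive.
  - simpl in Hp, HS. rewrite !Rmult_1_r in *.
    repeat split; try (eexists; eassumption); try lra.
    apply Rinv_0_lt_compat. exact HS.
  - replace (Derive (fun x => g1 x) t0) with d1 by (symmetry; apply is_derive_unique; exact H1).
    replace (Derive (fun x => g2 x) t0) with d2 by (symmetry; apply is_derive_unique; exact H2).
    simpl in HSS, HS |- *. rewrite !Rmult_1_r in *.
    set (S := sqrt (g1 t0 * g1 t0 + g2 t0 * g2 t0)) in *.
    assert (S <> 0) by lra.
    rewrite <- HSS. field. exact H.
Qed.

Lemma ballR (x e y : R) : ball x e y -> Rabs (y - x) < e.
Proof. intros H. exact H. Qed.

Lemma ballR' (x e y : R) : Rabs (y - x) < e -> ball x e y.
Proof. intros H. exact H. Qed.

Lemma path_loc (P : R * R -> Prop) (g1 g2 : R -> R) t0 :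
  locally (g1 t0, g2 t0) P -> continuous g1 t0 -> continuous g2 t0 ->
  locally t0 (fun t => P (g1 t, g2 t)).
Proof.
  intros HP H1 H2.
  assert (H2d : locally_2d (fun x y => P (x, y)) (g1 t0) (g2 t0)).
  { apply locally_2d_locally. eapply filter_imp; [|exact HP]. intros [u v] h; exact h. }
  destruct H2d as [d Hd].
  assert (L1 := H1 _ (locally_ball (g1 t0) d)).
  assert (L2 := H2 _ (locally_ball (g2 t0) d)).
  change (locally t0 (fun t => ball (g1 t0) d (g1 t))) in L1.
  change (locally t0 (fun t => ball (g2 t0) d (g2 t))) in L2.
  generalize (filter_and _ _ L1 L2). apply filter_imp.
  intros t [a b]. apply Hd; [exact (ballR _ _ _ a)|exact (ballR _ _ _ b)].
Qed.

Lemma theta_local (D : R * R -> Prop) theta z0 : open D -> ~ D (0,0) -> D z0 -> arg_branch D theta ->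
  locally z0 (fun z => theta z = theta z0 + atan ((snd z * fst z0 - fst z * snd z0) / (fst z * fst z0 + snd z * snd z0))).
Proof.
  intros HD H0 Hz0 [Hrep Hcont].
  assert (Hpi : 0 < PI / 2) by (pose proof PI_RGT_0; lra).
  set (e := mkposreal _ Hpi).
  assert (Lc := Hcont z0 Hz0 _ (locally_ball (theta z0) e)).
  change (locally z0 (fun z => ball (theta z0) e (theta z))) in Lc.
  generalize (filter_and _ _ Lc (HD z0 Hz0)). apply filter_imp.
  intros z [Hb Hz]. apply ballR in Hb. simpl in Hb.
  assert (Hnz : forall w, D w -> 0 < Cmod w).
  { intros w Hw. apply Cmod_gt_0. intro E. apply H0. change (D (RtoC 0)). rewrite <- E. exact Hw. }
  assert (Hr := Hnz z Hz). assert (Hr0 := Hnz z0 Hz0).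
  pose proof (Hrep z Hz) as Ez. pose proof (Hrep z0 Hz0) as Ez0.
  set (r := Cmod z) in *. set (r0 := Cmod z0) in *.
  set (th := theta z) in *. set (th0 := theta z0) in *.
  rewrite Ez, Ez0. simpl fst; simpl snd.
  assert (Hb' : - (PI/2) < th - th0 < PI/2) by (apply Rabs_def2 in Hb; lra).
  assert (Hc : 0 < cos (th - th0)) by (apply cos_gt_0; lra).
  replace ((r * sin th * (r0 * cos th0) - r * cos th * (r0 * sin th0)) /
           (r * cos th * (r0 * cos th0) + r * sin th * (r0 * sin th0)))
     with (tan (th - th0)).
  - rewrite atan_tan by exact Hb'. ring.
  - unfold tan. rewrite sin_minus, cos_minus. rewrite cos_minus in Hc.
    field. split; [|lra]. intro E.
    assert (r * r0 * (cos th * cos th0 + sin th * sin th0) = 0) by (rewrite <- E; ring).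
    assert (0 < r * r0 * (cos th * cos th0 + sin th * sin th0)) by (apply Rmult_lt_0_compat; [apply Rmult_lt_0_compat|]; lra).
    lra.
Qed.

Definition Psi (c : R) (theta : C -> R) (z : C) : R :=
  if Rlt_dec c 0 then 2 * sqrt (- c) * ln (/ Cmod z) else 2 * sqrt c * theta z.

Lemma Psi_chain (D : R * R -> Prop) theta c (g1 g2 : R -> R) t0 d1 d2 :
  open D -> ~ D (0,0) -> D (g1 t0, g2 t0) -> (0 < c -> arg_branch D theta) -> c <> 0 ->
  is_derive g1 t0 d1 -> is_derive g2 t0 d2 ->
  is_derive (fun t => Psi c theta (g1 t, g2 t)) t0
    (aa c (g1 t0, g2 t0) * d1 + bb c (g1 t0, g2 t0) * d2).
Proof.
  intros HD H0 Hz0 Harg Hc H1 H2.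
  assert (Hnz : (g1 t0, g2 t0) <> (0, 0)) by (intro E; rewrite E in Hz0; exact (H0 Hz0)).
  assert (Hr : g1 t0 ^ 2 + g2 t0 ^ 2 <> 0).
  { intro E. apply Hnz. assert (g1 t0 = 0) by nra. assert (g2 t0 = 0) by nra. rewrite H, H3. reflexivity. }
  unfold Psi, aa, bb; simpl fst; simpl snd.
  destruct (Rlt_dec c 0) as [Hn|Hn].
  - eapply is_derive_ext.
    { intros t. unfold Cmod. simpl fst; simpl snd. reflexivity. }
    replace (- (2 * sqrt (- c)) * g1 t0 / (g1 t0 ^ 2 + g2 t0 ^ 2) * d1 +
      - (2 * sqrt (- c)) * g2 t0 / (g1 t0 ^ 2 + g2 t0 ^ 2) * d2)
      with (- (2 * sqrt (- c)) * (g1 t0 * d1 + g2 t0 * d2) / (g1 t0 ^2 + g2 t0 ^2))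
      by (field; exact Hr).
    apply ln_chain; assumption.
  - assert (Hcp : 0 < c) by lra.
    assert (Hloc := theta_local D theta _ HD H0 Hz0 (Harg Hcp)).
    assert (Hp := path_loc _ g1 g2 t0 Hloc (ex_derive_continuous _ _ (ex_intro _ _ H1))
                     (ex_derive_continuous _ _ (ex_intro _ _ H2))).
    simpl fst in Hp; simpl snd in Hp.
    apply (is_derive_ext_loc (fun t => 2 * sqrt c * (theta (g1 t0, g2 t0) +
       atan ((g2 t * g1 t0 - g1 t * g2 t0) / (g1 t * g1 t0 + g2 t * g2 t0))))).
    { eapply filter_imp; [|exact Hp]. intros t Ht. simpl in Ht. rewrite Ht. reflexivity. }
    auto_derive.
    + repeat split; try (eexists; eassumption).
      intro E. apply Hr. simpl. rewrite <- E. ring.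
    + replace (Derive (fun x => g1 x) t0) with d1 by (symmetry; apply is_derive_unique; exact H1).
      replace (Derive (fun x => g2 x) t0) with d2 by (symmetry; apply is_derive_unique; exact H2).
      replace (g2 t0 * g1 t0 - g1 t0 * g2 t0) with 0 by ring.
      assert (Hr' : g1 t0 * g1 t0 + g2 t0 * g2 t0 <> 0) by (intro E; apply Hr; simpl; rewrite <- E; ring).
      field. split; [exact Hr|].
      replace (g2 t0 * g1 t0 + - (g1 t0 * g2 t0)) with 0 by ring.
      intro E. apply Hr'. nra.
Qed.

Definition ax c x y := if Rlt_dec c 0 then -(2*sqrt(-c))*(y^2-x^2)/(x^2+y^2)^2 else 2*(2*sqrt c)*x*y/(x^2+y^2)^2.
Definition ay c x y := if Rlt_dec c 0 then 2*(2*sqrt(-c))*x*y/(x^2+y^2)^2 else -(2*sqrt c)*(x^2-y^2)/(x^2+y^2)^2.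
Definition bx c x y := if Rlt_dec c 0 then 2*(2*sqrt(-c))*x*y/(x^2+y^2)^2 else (2*sqrt c)*(y^2-x^2)/(x^2+y^2)^2.
Definition by_ c x y := if Rlt_dec c 0 then -(2*sqrt(-c))*(x^2-y^2)/(x^2+y^2)^2 else -2*(2*sqrt c)*x*y/(x^2+y^2)^2.

Lemma div_free c x y : ax c x y + by_ c x y = 0.
Proof. unfold ax, by_. destruct (Rlt_dec c 0); unfold Rdiv; ring. Qed.

Lemma ab_chain c (g1 g2 : R -> R) t0 d1 d2 :
  is_derive g1 t0 d1 -> is_derive g2 t0 d2 -> g1 t0 ^ 2 + g2 t0 ^ 2 <> 0 ->
  is_derive (fun t => aa c (g1 t, g2 t)) t0 (ax c (g1 t0) (g2 t0) * d1 + ay c (g1 t0) (g2 t0) * d2) /\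
  is_derive (fun t => bb c (g1 t, g2 t)) t0 (bx c (g1 t0) (g2 t0) * d1 + by_ c (g1 t0) (g2 t0) * d2).
Proof.
  intros H1 H2 Hr.
  assert (Hr' : g1 t0 * (g1 t0 * 1) + g2 t0 * (g2 t0 * 1) <> 0) by (intro E; apply Hr; rewrite <- E; ring).
  unfold aa, bb, ax, ay, bx, by_; simpl fst; simpl snd.
  destruct (Rlt_dec c 0); split; auto_derive;
    try (repeat split; try (eexists; eassumption); exact Hr');
    (replace (Derive (fun x => g1 x) t0) with d1 by (symmetry; apply is_derive_unique; exact H1));
    (replace (Derive (fun x => g2 x) t0) with d2 by (symmetry; apply is_derive_unique; exact H2));
    field; repeat split; try assumption.
Qed.

Lemma sm_cont U h p : smooth_on U h -> U p -> continuous h p.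
Proof. intros H Hp. exact (H 0%nat p Hp). Qed.

Lemma sm_px U h : smooth_on U h -> smooth_on U (partial_x h).
Proof. intros H n. exact (proj1 (proj2 (proj2 (H (S n))))). Qed.

Lemma sm_py U h : smooth_on U h -> smooth_on U (partial_y h).
Proof. intros H n. exact (proj2 (proj2 (proj2 (H (S n))))). Qed.

Lemma sm_dx U h p : smooth_on U h -> U p ->
  is_derive (fun t => h (t, snd p)) (fst p) (partial_x h p).
Proof.
  intros H Hp. destruct (proj1 (proj2 (H 1%nat)) p Hp) as [H1 _].
  apply Derive_correct. exact H1.
Qed.

Lemma sm_dy U h p : smooth_on U h -> U p ->
  is_derive (fun t => h (fst p, t)) (snd p) (partial_y h p).
Proof.
  intros H Hp. destruct (proj1 (proj2 (H 1%nat)) p Hp) as [_ H1].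
  apply Derive_correct. exact H1.
Qed.

Lemma sm_diff U h p : open U -> smooth_on U h -> U p ->
  differentiable_pt_lim (fun u v => h (u, v)) (fst p) (snd p) (partial_x h p) (partial_y h p).
Proof. intros HU H Hp. exact (diff_C2 U h p HU (H 2%nat) Hp). Qed.

Lemma sm_schwarz U h p : open U -> smooth_on U h -> U p ->
  partial_x (partial_y h) p = partial_y (partial_x h) p.
Proof.
  intros HU H Hp. destruct p as [x y].
  pose proof (Schwarz (fun u v => h (u, v)) x y) as S.
  unfold partial_x, partial_y; simpl.
  apply S.
  - eapply locally_2d_impl; [|exact (open_2d U (x, y) HU Hp)].
    apply locally_2d_forall. intros u v Huv.
    destruct (proj1 (proj2 (H 1%nat)) (u, v) Huv) as [e1 e2].
    destruct (proj1 (proj2 (sm_py U h H 1%nat)) (u, v) Huv) as [e3 _].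
    destruct (proj1 (proj2 (sm_px U h H 1%nat)) (u, v) Huv) as [_ e4].
    repeat split; [exact e1|exact e2|exact e3|exact e4].
  - exact (cont2d _ (x, y) (sm_cont U _ (x, y) (sm_px U _ (sm_py U h H)) Hp)).
  - exact (cont2d _ (x, y) (sm_cont U _ (x, y) (sm_py U _ (sm_px U h H)) Hp)).
Qed.

Lemma comp_line_x (h : R * R -> R) (p1 p2 : R * R -> R) z hx hy d1 d2 :
  differentiable_pt_lim (fun u v => h (u, v)) (p1 z) (p2 z) hx hy ->
  is_derive (fun t => p1 (t, snd z)) (fst z) d1 ->
  is_derive (fun t => p2 (t, snd z)) (fst z) d2 ->
  is_derive (fun t => h (p1 (t, snd z), p2 (t, snd z))) (fst z) (hx * d1 + hy * d2).
Proof.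
  intros Hd H1 H2. apply is_derive_Reals.
  destruct z as [x y]; simpl in *.
  apply (derivable_pt_lim_comp_2d (fun u v => h (u, v)) (fun t => p1 (t, y)) (fun t => p2 (t, y))).
  - exact Hd.
  - apply is_derive_Reals; exact H1.
  - apply is_derive_Reals; exact H2.
Qed.

Lemma comp_line_y (h : R * R -> R) (p1 p2 : R * R -> R) z hx hy d1 d2 :
  differentiable_pt_lim (fun u v => h (u, v)) (p1 z) (p2 z) hx hy ->
  is_derive (fun t => p1 (fst z, t)) (snd z) d1 ->
  is_derive (fun t => p2 (fst z, t)) (snd z) d2 ->
  is_derive (fun t => h (p1 (fst z, t), p2 (fst z, t))) (snd z) (hx * d1 + hy * d2).
Proof.
  intros Hd H1 H2. apply is_derive_Reals.
  destruct z as [x y]; simpl in *.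
  apply (derivable_pt_lim_comp_2d (fun u v => h (u, v)) (fun t => p1 (x, t)) (fun t => p2 (x, t))).
  - exact Hd.
  - apply is_derive_Reals; exact H1.
  - apply is_derive_Reals; exact H2.
Qed.

Lemma deriv_combo (p1 p2 q1 q2 : R -> R) t0 dp1 dp2 dq1 dq2 sg :
  is_derive p1 t0 dp1 -> is_derive p2 t0 dp2 -> is_derive q1 t0 dq1 -> is_derive q2 t0 dq2 ->
  is_derive (fun t => sg * (p1 t * q1 t - p2 t * q2 t)) t0
    (sg * (dp1 * q1 t0 + p1 t0 * dq1 - (dp2 * q2 t0 + p2 t0 * dq2))).
Proof.
  intros H1 H2 H3 H4.
  auto_derive.
  - repeat split; eexists; eassumption.
  - replace (Derive (fun x => p1 x) t0) with dp1 by (symmetry; apply is_derive_unique; exact H1).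
    replace (Derive (fun x => p2 x) t0) with dp2 by (symmetry; apply is_derive_unique; exact H2).
    replace (Derive (fun x => q1 x) t0) with dq1 by (symmetry; apply is_derive_unique; exact H3).
    replace (Derive (fun x => q2 x) t0) with dq2 by (symmetry; apply is_derive_unique; exact H4).
    ring.
Qed.

Lemma line_x_loc (U : R * R -> Prop) p : open U -> U p -> locally (fst p) (fun t => U (t, snd p)).
Proof. intros HU Hp. exact (locally_2d_1d_const_y _ _ _ (open_2d U p HU Hp)). Qed.
Lemma line_y_loc (U : R * R -> Prop) p : open U -> U p -> locally (snd p) (fun t => U (fst p, t)).
Proof. intros HU Hp. exact (locally_2d_1d_const_x _ _ _ (open_2d U p HU Hp)). Qed.

Lemma jac_x (h f1 f2 k : R * R -> R) (D : R * R -> Prop) z w hx hy d1 d2 L :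
  open D -> D z -> f1 z = fst w -> f2 z = snd w ->
  differentiable_pt_lim (fun u v => h (u, v)) (fst w) (snd w) hx hy ->
  is_derive (fun t => f1 (t, snd z)) (fst z) d1 ->
  is_derive (fun t => f2 (t, snd z)) (fst z) d2 ->
  (forall q, D q -> h (f1 q, f2 q) = k q) ->
  is_derive (fun t => k (t, snd z)) (fst z) L -> hx * d1 + hy * d2 = L.
Proof.
  intros HD Hz E1 E2 Hd H1 H2 Hk HL.
  rewrite <- E1, <- E2 in Hd.
  pose proof (comp_line_x h f1 f2 z hx hy d1 d2 Hd H1 H2) as Hc.
  assert (Hc' : is_derive (fun t => k (t, snd z)) (fst z) (hx * d1 + hy * d2)).
  { eapply is_derive_ext_loc; [|exact Hc].
    eapply filter_imp; [|exact (line_x_loc D z HD Hz)]. intros t Ht. apply Hk. exact Ht. }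
  rewrite <- (is_derive_unique _ _ _ Hc'). exact (is_derive_unique _ _ _ HL).
Qed.

Lemma jac_y (h f1 f2 k : R * R -> R) (D : R * R -> Prop) z w hx hy d1 d2 L :
  open D -> D z -> f1 z = fst w -> f2 z = snd w ->
  differentiable_pt_lim (fun u v => h (u, v)) (fst w) (snd w) hx hy ->
  is_derive (fun t => f1 (fst z, t)) (snd z) d1 ->
  is_derive (fun t => f2 (fst z, t)) (snd z) d2 ->
  (forall q, D q -> h (f1 q, f2 q) = k q) ->
  is_derive (fun t => k (fst z, t)) (snd z) L -> hx * d1 + hy * d2 = L.
Proof.
  intros HD Hz E1 E2 Hd H1 H2 Hk HL.
  rewrite <- E1, <- E2 in Hd.
  pose proof (comp_line_y h f1 f2 z hx hy d1 d2 Hd H1 H2) as Hc.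
  assert (Hc' : is_derive (fun t => k (fst z, t)) (snd z) (hx * d1 + hy * d2)).
  { eapply is_derive_ext_loc; [|exact Hc].
    eapply filter_imp; [|exact (line_y_loc D z HD Hz)]. intros t Ht. apply Hk. exact Ht. }
  rewrite <- (is_derive_unique _ _ _ Hc'). exact (is_derive_unique _ _ _ HL).
Qed.

Lemma d_id x : is_derive (fun t : R => t) x 1.
Proof. auto_derive; auto. Qed.
Lemma d_cst (a x : R) : is_derive (fun t : R => a) x 0.
Proof. auto_derive; auto. Qed.

Lemma jacobian (D Om : R * R -> Prop) (f g : C -> C) w :
  open D -> open Om -> (forall w, Om w -> D (g w)) -> (forall z, D z -> g (f z) = z) ->
  (forall w, Om w -> f (g w) = w) ->
  smooth_map_on D f -> smooth_map_on Om g -> Om w ->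
  let g1 := fun p => fst (g p) in let g2 := fun p => snd (g p) in
  let f1 := fun p => fst (f p) in let f2 := fun p => snd (f p) in
  partial_x g1 w * partial_x f1 (g w) + partial_y g1 w * partial_x f2 (g w) = 1 /\
  partial_x g2 w * partial_x f1 (g w) + partial_y g2 w * partial_x f2 (g w) = 0 /\
  partial_x g1 w * partial_y f1 (g w) + partial_y g1 w * partial_y f2 (g w) = 0 /\
  partial_x g2 w * partial_y f1 (g w) + partial_y g2 w * partial_y f2 (g w) = 1.
Proof.
  intros HD HO HgO Hgf Hfg [Sf1 Sf2] [Sg1 Sg2] Hw g1 g2 f1 f2.
  set (z := g w).
  assert (Hz : D z) by (apply HgO; exact Hw).
  assert (E1 : f1 z = fst w) by (unfold f1, z; rewrite Hfg; auto).
  assert (E2 : f2 z = snd w) by (unfold f2, z; rewrite Hfg; auto).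
  assert (K1 : forall q, D q -> g1 (f1 q, f2 q) = fst q).
  { intros q Hq. unfold g1, f1, f2. rewrite <- surjective_pairing, Hgf; auto. }
  assert (K2 : forall q, D q -> g2 (f1 q, f2 q) = snd q).
  { intros q Hq. unfold g2, f1, f2. rewrite <- surjective_pairing, Hgf; auto. }
  pose proof (sm_diff Om g1 w HO Sg1 Hw) as Dg1.
  pose proof (sm_diff Om g2 w HO Sg2 Hw) as Dg2.
  pose proof (sm_dx D f1 z Sf1 Hz) as Fx1. pose proof (sm_dx D f2 z Sf2 Hz) as Fx2.
  pose proof (sm_dy D f1 z Sf1 Hz) as Fy1. pose proof (sm_dy D f2 z Sf2 Hz) as Fy2.
  repeat split.
  - eapply (jac_x g1 f1 f2 fst D z w); eauto. simpl. apply d_id.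
  - eapply (jac_x g2 f1 f2 snd D z w); eauto. simpl. apply d_cst.
  - eapply (jac_y g1 f1 f2 fst D z w); eauto. simpl. apply d_cst.
  - eapply (jac_y g2 f1 f2 snd D z w); eauto. simpl. apply d_id.
Qed.

Lemma r2_nz (D : R * R -> Prop) x y : ~ D (0, 0) -> D (x, y) -> x ^ 2 + y ^ 2 <> 0.
Proof.
  intros H0 Hz E. apply H0. assert (x = 0) by nra. assert (y = 0) by nra. subst. exact Hz.
Qed.

Lemma conf_at (D Om : R * R -> Prop) (wp : R * R -> R) (f g : C -> C) c w :
  ~ D (0, 0) -> (forall w, Om w -> D (g w)) -> (forall w, Om w -> f (g w) = w) ->
  (forall z, D z ->
     Cmult (RtoC (wp (f z) ^ 2)) (Cmult (f_z f z) (Cconj (f_zbar f z)))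
     = Cdiv (RtoC c) (Cmult z z)) -> c <> 0 -> Om w ->
  let z := g w in
  let Ux := partial_x (fun p => fst (f p)) z in let Vx := partial_x (fun p => snd (f p)) z in
  let Uy := partial_y (fun p => fst (f p)) z in let Vy := partial_y (fun p => snd (f p)) z in
  wp w ^2*(Ux^2+Vx^2) + (aa c z)^2 = wp w^2*(Uy^2+Vy^2) + (bb c z)^2 /\
  wp w^2*(Ux*Uy+Vx*Vy) + aa c z * bb c z = 0.
Proof.
  intros H0 HgO Hfg Hh Hc Hw z Ux Vx Uy Vy.
  assert (Hz : D z) by (apply HgO; exact Hw).
  pose proof (Hh z Hz) as H. unfold z in H. rewrite Hfg in H by exact Hw. fold z in H.
  unfold f_z, f_zbar, dx, dy in H. fold Ux Vx Uy Vy in H.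
  clearbody Ux Vx Uy Vy.
  clearbody z. destruct z as [x y].
  apply hopf_parts in H; [|exact (r2_nz D x y H0 Hz)].
  destruct H as [E1 E2].
  exact (conf c x y Ux Vx Uy Vy (wp w) (r2_nz D x y H0 Hz) Hc E1 E2).
Qed.

Lemma omega_d (D Om : R * R -> Prop) (g : C -> C) c theta w :
  open D -> ~ D (0, 0) -> (forall w, Om w -> D (g w)) -> smooth_map_on Om g ->
  (0 < c -> arg_branch D theta) -> c <> 0 -> Om w ->
  is_derive (fun t => omega c g theta (t, snd w)) (fst w)
    (aa c (g w) * partial_x (fun p => fst (g p)) w + bb c (g w) * partial_x (fun p => snd (g p)) w) /\
  is_derive (fun t => omega c g theta (fst w, t)) (snd w)
    (aa c (g w) * partial_y (fun p => fst (g p)) w + bb c (g w) * partial_y (fun p => snd (g p)) w).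
Proof.
  intros HD H0 HgO [Sg1 Sg2] Harg Hc Hw.
  assert (Hz : D (g w)) by (apply HgO; exact Hw).
  destruct w as [u v]. simpl.
  pose proof (sm_dx Om _ (u, v) Sg1 Hw) as X1. pose proof (sm_dx Om _ (u, v) Sg2 Hw) as X2.
  pose proof (sm_dy Om _ (u, v) Sg1 Hw) as Y1. pose proof (sm_dy Om _ (u, v) Sg2 Hw) as Y2.
  simpl in X1, X2, Y1, Y2.
  rewrite (surjective_pairing (g (u, v))) in Hz |- *.
  split.
  - pose proof (Psi_chain D theta c (fun t => fst (g (t, v))) (fun t => snd (g (t, v))) u _ _
                  HD H0 Hz Harg Hc X1 X2) as P.
    eapply is_derive_ext; [|exact P].
    intros t. simpl. unfold omega, Psi. rewrite <- surjective_pairing. reflexivity.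
  - pose proof (Psi_chain D theta c (fun t => fst (g (u, t))) (fun t => snd (g (u, t))) v _ _
                  HD H0 Hz Harg Hc Y1 Y2) as P.
    eapply is_derive_ext; [|exact P].
    intros t. simpl. unfold omega, Psi. rewrite <- surjective_pairing. reflexivity.
Qed.

Definition dG (g : C -> C) (w : R * R) : R :=
  partial_x (fun p => fst (g p)) w * partial_y (fun p => snd (g p)) w -
  partial_y (fun p => fst (g p)) w * partial_x (fun p => snd (g p)) w.

Lemma flux_formula (D Om : R * R -> Prop) (wp : R * R -> R) (f g : C -> C) c theta w sg :
  open D -> open Om -> ~ D (0, 0) -> (forall w, Om w -> 0 < wp w) ->
  diffeo D Om f g ->
  (forall z, D z ->
     Cmult (RtoC (wp (f z) ^ 2)) (Cmult (f_z f z) (Cconj (f_zbar f z)))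
     = Cdiv (RtoC c) (Cmult z z)) -> c <> 0 ->
  (0 < c -> arg_branch D theta) -> Om w -> sg * sg = 1 -> 0 < sg * dG g w ->
  flux_x wp (omega c g theta) w =
    sg * (partial_y (fun p => snd (g p)) w * aa c (g w) - partial_y (fun p => fst (g p)) w * bb c (g w)) /\
  flux_y wp (omega c g theta) w =
    sg * (partial_x (fun p => fst (g p)) w * bb c (g w) - partial_x (fun p => snd (g p)) w * aa c (g w)).
Proof.
  intros HD HO H0 Hpos Hdf Hh Hc Harg Hw Hsg Hd.
  destruct Hdf as [HfD [HgO [Hgf [Hfg [Sf Sg]]]]].
  destruct (omega_d D Om g c theta w HD H0 HgO Sg Harg Hc Hw) as [Ox Oy].
  destruct (jacobian D Om f g w HD HO HgO Hgf Hfg Sf Sg Hw) as [J1 [J2 [J3 J4]]].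
  destruct (conf_at D Om wp f g c w H0 HgO Hfg Hh Hc Hw) as [C1 C2].
  assert (Px : partial_x (omega c g theta) w = aa c (g w) * partial_x (fun p => fst (g p)) w + bb c (g w) * partial_x (fun p => snd (g p)) w)
    by (unfold partial_x at 1; apply is_derive_unique; exact Ox).
  assert (Py : partial_y (omega c g theta) w = aa c (g w) * partial_y (fun p => fst (g p)) w + bb c (g w) * partial_y (fun p => snd (g p)) w)
    by (unfold partial_y at 1; apply is_derive_unique; exact Oy).
  unfold flux_x, flux_y. rewrite Px, Py.
  apply alg with (Ux := partial_x (fun p => fst (f p)) (g w)) (Uy := partial_y (fun p => fst (f p)) (g w))
                 (Vx := partial_x (fun p => snd (f p)) (g w)) (Vy := partial_y (fun p => snd (f p)) (g w));
    try assumption.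
  apply Hpos; exact Hw.
Qed.

Lemma aab_line (D Om : R * R -> Prop) (g : C -> C) c u0 v0 :
  ~ D (0, 0) -> (forall w, Om w -> D (g w)) -> smooth_map_on Om g -> Om (u0, v0) ->
  let G1 := fun p => fst (g p) in let G2 := fun p => snd (g p) in
  let x0 := fst (g (u0, v0)) in let y0 := snd (g (u0, v0)) in
  is_derive (fun t => aa c (g (t, v0))) u0 (ax c x0 y0 * partial_x G1 (u0, v0) + ay c x0 y0 * partial_x G2 (u0, v0)) /\
  is_derive (fun t => bb c (g (t, v0))) u0 (bx c x0 y0 * partial_x G1 (u0, v0) + by_ c x0 y0 * partial_x G2 (u0, v0)) /\
  is_derive (fun t => aa c (g (u0, t))) v0 (ax c x0 y0 * partial_y G1 (u0, v0) + ay c x0 y0 * partial_y G2 (u0, v0)) /\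
  is_derive (fun t => bb c (g (u0, t))) v0 (bx c x0 y0 * partial_y G1 (u0, v0) + by_ c x0 y0 * partial_y G2 (u0, v0)).
Proof.
  intros H0 HgO [Sg1 Sg2] Hw G1 G2 x0 y0.
  assert (Hz : D (g (u0, v0))) by (apply HgO; exact Hw).
  rewrite (surjective_pairing (g (u0, v0))) in Hz.
  pose proof (r2_nz D _ _ H0 Hz) as Hr.
  pose proof (sm_dx Om _ (u0, v0) Sg1 Hw) as X1. pose proof (sm_dx Om _ (u0, v0) Sg2 Hw) as X2.
  pose proof (sm_dy Om _ (u0, v0) Sg1 Hw) as Y1. pose proof (sm_dy Om _ (u0, v0) Sg2 Hw) as Y2.
  simpl in X1, X2, Y1, Y2.
  destruct (ab_chain c (fun t => fst (g (t, v0))) (fun t => snd (g (t, v0))) u0 _ _ X1 X2 Hr) as [A1 B1].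
  destruct (ab_chain c (fun t => fst (g (u0, t))) (fun t => snd (g (u0, t))) v0 _ _ Y1 Y2 Hr) as [A2 B2].
  repeat split; (eapply is_derive_ext; [|eassumption]); intros t; simpl; rewrite <- surjective_pairing; reflexivity.
Qed.

Lemma det_mult a11 a12 a21 a22 U1 U2 V1 V2 : a11*U1 + a12*V1 = 1 -> a21*U1 + a22*V1 = 0 ->
  a11*U2 + a12*V2 = 0 -> a21*U2 + a22*V2 = 1 -> a11*a22 - a12*a21 <> 0.
Proof.
  intros J1 J2 J3 J4 E.
  assert ((a11 * a22 - a12 * a21) * (U1 * V2 - U2 * V1) = 1).
  { transitivity ((a11*U1 + a12*V1)*(a21*U2 + a22*V2) - (a11*U2 + a12*V2)*(a21*U1 + a22*V1)).
    ring. rewrite J1, J2, J3, J4. ring. }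
  rewrite E in H. lra.
Qed.

Lemma sum0 (a b a' b' : R) : a = a' -> b = b' -> a' + b' = 0 -> a + b = 0.
Proof. intros -> ->; auto. Qed.

Theorem proposition3p4
  (D Om : R * R -> Prop) (wp : R * R -> R) (f g : C -> C) (c : R)
  (theta : C -> R) :
  planar_domain D -> planar_domain Om -> ~ D (0, 0) ->
  smooth_on Om wp -> (forall w, Om w -> 0 < wp w) ->
  diffeo D Om f g ->
  (forall z, D z ->
     Cmult (RtoC (wp (f z) ^ 2)) (Cmult (f_z f z) (Cconj (f_zbar f z)))
     = Cdiv (RtoC c) (Cmult z z)) ->
  c <> 0 ->
  (0 < c -> arg_branch D theta) ->
  (forall w, Om w ->
     ex_derive (fun t => omega c g theta (t, snd w)) (fst w) /\
     ex_derive (fun t => omega c g theta (fst w, t)) (snd w)) /\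
  (forall w, Om w ->
     ex_derive (fun t => flux_x wp (omega c g theta) (t, snd w)) (fst w) /\
     ex_derive (fun t => flux_y wp (omega c g theta) (fst w, t)) (snd w) /\
     partial_x (flux_x wp (omega c g theta)) w
     + partial_y (flux_y wp (omega c g theta)) w = 0).
Proof.
  intros [_ [HD _]] [_ [HO _]] H0 Hwp Hpos Hdf Hh Hc Harg.
  pose proof Hdf as Hdf'.
  destruct Hdf' as [HfD [HgO [Hgf [Hfg [Sf Sg]]]]].
  split.
  { intros w Hw. destruct (omega_d D Om g c theta w HD H0 HgO Sg Harg Hc Hw) as [Ox Oy].
    split; eexists; eassumption. }
  intros w0 Hw0.
  destruct (jacobian D Om f g w0 HD HO HgO Hgf Hfg Sf Sg Hw0) as [J1 [J2 [J3 J4]]].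

  assert (HdG : dG g w0 <> 0) by (unfold dG; exact (det_mult _ _ _ _ _ _ _ _ J1 J2 J3 J4)).
  set (sg := if Rlt_dec 0 (dG g w0) then 1 else -1).
  assert (Hsg : sg * sg = 1) by (unfold sg; destruct (Rlt_dec 0 (dG g w0)); ring).
  assert (Hsg0 : 0 < sg * dG g w0).
  { unfold sg; destruct (Rlt_dec 0 (dG g w0)) as [h|h]; [lra|].
    assert (dG g w0 < 0) by (destruct (Rdichotomy _ _ HdG); lra). lra. }
  destruct Sg as [Sg1 Sg2].
  assert (Cdg : continuity_2d_pt (fun u v => sg * dG g (u, v)) (fst w0) (snd w0)).
  { pose proof (cont2d _ w0 (sm_cont Om _ w0 (sm_px Om _ Sg1) Hw0)) as c11.
    pose proof (cont2d _ w0 (sm_cont Om _ w0 (sm_py Om _ Sg1) Hw0)) as c12.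
    pose proof (cont2d _ w0 (sm_cont Om _ w0 (sm_px Om _ Sg2) Hw0)) as c21.
    pose proof (cont2d _ w0 (sm_cont Om _ w0 (sm_py Om _ Sg2) Hw0)) as c22.
    apply continuity_2d_pt_mult with (f := fun _ _ => sg); [apply continuity_2d_pt_const|].
    unfold dG. apply continuity_2d_pt_minus; apply continuity_2d_pt_mult; assumption. }
  assert (Nb : locally_2d (fun u v => Om (u, v) /\ 0 < sg * dG g (u, v)) (fst w0) (snd w0)).
  { apply locally_2d_and; [exact (open_2d Om w0 HO Hw0)|].
    eapply locally_2d_impl; [|exact (Cdg (mkposreal _ Hsg0))].
    apply locally_2d_forall. intros u v Huv. simpl in Huv.
    destruct w0 as [u0 v0]. simpl in Huv. apply Rabs_def2 in Huv. lra. }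
  assert (FF : locally_2d (fun u v =>
     flux_x wp (omega c g theta) (u, v) =
       sg * (partial_y (fun p => snd (g p)) (u, v) * aa c (g (u, v)) - partial_y (fun p => fst (g p)) (u, v) * bb c (g (u, v))) /\
     flux_y wp (omega c g theta) (u, v) =
       sg * (partial_x (fun p => fst (g p)) (u, v) * bb c (g (u, v)) - partial_x (fun p => snd (g p)) (u, v) * aa c (g (u, v))))
     (fst w0) (snd w0)).
  { eapply locally_2d_impl; [|exact Nb]. apply locally_2d_forall.
    intros u v [Huv Hs]. exact (flux_formula D Om wp f g c theta (u, v) sg HD HO H0 Hpos Hdf Hh Hc Harg Huv Hsg Hs). }
  destruct w0 as [u0 v0]. simpl in *.
  destruct (aab_line D Om g c u0 v0 H0 HgO (conj Sg1 Sg2) Hw0) as [A1 [B1 [A2 B2]]].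
  simpl in A1, B1, A2, B2.
  pose proof (sm_dx Om _ (u0, v0) (sm_py Om _ Sg2) Hw0) as P22. simpl in P22.
  pose proof (sm_dx Om _ (u0, v0) (sm_py Om _ Sg1) Hw0) as P12. simpl in P12.
  pose proof (sm_dy Om _ (u0, v0) (sm_px Om _ Sg1) Hw0) as P11. simpl in P11.
  pose proof (sm_dy Om _ (u0, v0) (sm_px Om _ Sg2) Hw0) as P21. simpl in P21.
  pose proof (deriv_combo _ _ _ _ u0 _ _ _ _ sg P22 P12 A1 B1) as DX.
  pose proof (deriv_combo _ _ _ _ v0 _ _ _ _ sg P11 P21 B2 A2) as DY.
  eassert (DX' : is_derive (fun t => flux_x wp (omega c g theta) (t, v0)) u0 _).
  { eapply is_derive_ext_loc; [|exact DX].
    eapply filter_imp; [|exact (locally_2d_1d_const_y _ _ _ FF)].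
    intros t [E _]. simpl. rewrite E. reflexivity. }
  eassert (DY' : is_derive (fun t => flux_y wp (omega c g theta) (u0, t)) v0 _).
  { eapply is_derive_ext_loc; [|exact DY].
    eapply filter_imp; [|exact (locally_2d_1d_const_x _ _ _ FF)].
    intros t [_ E]. simpl. rewrite E. reflexivity. }
  split; [eexists; exact DX'|]. split; [eexists; exact DY'|].
  pose proof (is_derive_unique _ _ _ DX') as UX. pose proof (is_derive_unique _ _ _ DY') as UY.
  change (partial_x (flux_x wp (omega c g theta)) (u0, v0)) with (Derive (fun t => flux_x wp (omega c g theta) (t, v0)) u0).
  change (partial_y (flux_y wp (omega c g theta)) (u0, v0)) with (Derive (fun t => flux_y wp (omega c g theta) (u0, t)) v0).
  apply (sum0 _ _ _ _ UX UY).
  pose proof (sm_schwarz Om _ (u0, v0) HO Sg1 Hw0) as Sw1.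
  pose proof (sm_schwarz Om _ (u0, v0) HO Sg2 Hw0) as Sw2.
  rewrite Sw1, Sw2.
  pose proof (div_free c (fst (g (u0, v0))) (snd (g (u0, v0)))) as Dv.
  set (AX := ax c (fst (g (u0, v0))) (snd (g (u0, v0)))) in *.
  set (BY := by_ c (fst (g (u0, v0))) (snd (g (u0, v0)))) in *.
  replace BY with (- AX) by lra.
  unfold C in *. ring.
Qed.
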